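(* Let $t \ge 2$ and $G = K_{m_1} \otimes \cdots \otimes K_{m_t}$ with $m_i \geq 3$ for all $i$. Then $$\dim(G) \geq \max_{1 \le j \le t} \dim\Big(\bigotimes_{i \ne j} K_{m_i}\Big),$$ where $\bigotimes_{i\ne j} K_{m_i}$ is the tensor product of the $t-1$ cliques obtained by omitting the $j$-th factor.
   Context: $K_r$ is the complete graph on $r$ vertices. The tensor product of graphs has vertex set the Cartesian product of vertex sets, with $(a_1,\dots,a_t)$ adjacent to $(b_1,\dots,b_t)$ iff $a_ib_i$ is an edge of the $i$-th factor for every $i$ (a product with a single factor is that factor). For a connected graph and an ordered set $W=\{w_1,\dots,w_k\}$ of vertices, $r(v\mid W)=(d(v,w_1),\dots,d(v,w_k))$; $W$ is resolving if distinct vertices have distinct representations; $\dim(G)$ is the minimum size of a resolving set. *)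

(* Defs.v *)
From HB Require Import structures.
From mathcomp Require Import all_boot.
Set Implicit Arguments. Unset Strict Implicit. Unset Printing Implicit Defensive.

(* Graph distance: the least n such that there is a walk of length exactly n
   from x to y (searched among n < #|T|; for connected graphs the distance is
   always < #|T|). *)
Definition walkb (T : finType) (e : rel T) (n : nat) (x y : T) : bool :=
  [exists p : n.-tuple T, path e x p && (last x p == y)].

Definition dist (T : finType) (e : rel T) (x y : T) : nat :=
  find (fun n => walkb e n x y) (iota 0 #|T|).

Definition connected_graph (T : finType) (e : rel T) : Prop :=
  forall x y : T, connect e x y.

Definition resolving (T : finType) (e : rel T) (W : {set T}) : bool :=
  [forall x : T, forall y : T,
     [forall w in W, dist e x w == dist e y w] ==> (x == y)].

Definition metric_dim (T : finType) (e : rel T) : nat :=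
  find (fun k => [exists W : {set T}, resolving e W && (#|W| == k)])
       (iota 0 #|T|.+1).

(* Tensor product of cliques K_{m i}, i ranging over a finite index type I:
   vertices are tuples (a_i)_i with a_i in 'I_(m i); adjacency iff a_i b_i
   is an edge of K_{m i} (i.e. a_i != b_i) for every i. *)
Definition clique_prod_vert (I : finType) (m : I -> nat) : finType :=
  {dffun forall i : I, 'I_(m i)}.

Definition clique_prod_adj (I : finType) (m : I -> nat) :
  rel (clique_prod_vert m) :=
  fun x y => [forall i : I, x i != y i].

Definition omit_factor (t : nat) (m : 'I_t -> nat) (j : 'I_t) :
  {i : 'I_t | i != j} -> nat := fun i => m (val i).

(* Main.v *)
Require Import Defs.
From mathcomp Require Import all_boot.
From mathcomp Require Import zify.
Set Implicit Arguments. Unset Strict Implicit. Unset Printing Implicit Defensive.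

Section Gen.
Variables (T : finType) (e : rel T).

Lemma walkb0 x y : walkb e 0 x y = (x == y).
Proof.
apply/existsP/eqP => [[[[|a s] //=] _ /eqP] //|->].
by exists [tuple]; rewrite /= eqxx.
Qed.

Lemma walkb1 x y : walkb e 1 x y = e x y.
Proof.
apply/existsP/idP => [[[[|a [|b s]] //=] _ /andP[/andP[h _] /eqP <-]] //|h].
by exists [tuple y]; rewrite /= h eqxx.
Qed.

Lemma md_le W : resolving e W -> metric_dim e <= #|W|.
Proof.
move=> hW; rewrite /metric_dim leqNgt; apply/negP => hlt.
have := before_find 0 hlt.
rewrite nth_iota; last by rewrite ltnS max_card.
by rewrite add0n /= => /negbT/negP; apply; apply/existsP; exists W; rewrite hW eqxx.
Qed.

Lemma md_ex : resolving e setT -> exists W, resolving e W /\ #|W| = metric_dim e.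
Proof.
move=> hT; rewrite /metric_dim.
set P := (fun k : nat => [exists W : {set T}, _]).
have hh : has P (iota 0 #|T|.+1).
  apply/hasP; exists #|T|; first by rewrite mem_iota add0n leqnn.
  by rewrite /P; apply/existsP; exists setT; rewrite hT cardsT eqxx.
have := nth_find 0 hh.
rewrite nth_iota ?add0n; last by move: hh; rewrite has_find size_iota.
by move=> /existsP [W /andP [hW /eqP hc]]; exists W.
Qed.
End Gen.

Section Clique.
Variables (I : finType) (m : I -> nat) (hm : forall i, 3 <= m i).
Local Notation T := (clique_prod_vert m).
Local Notation e := (@clique_prod_adj _ m).

Lemma pick3 n (a b : 'I_n) : 3 <= n -> exists c : 'I_n, (c != a) && (c != b).
Proof.
move=> hn.
case: (boolP [exists c : 'I_n, (c != a) && (c != b)]) => [/existsP //|/existsPn h].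
exfalso.
have : 'I_n \subset [set a; b].
  apply/subsetP => c _; rewrite !inE.
  by move: (h c); case: (c == a); case: (c == b).
move/subset_leq_card; rewrite card_ord cards2; lia.
Qed.

Definition cn (x y : T) : T :=
  finfun (fun i => odflt (x i) [pick c | (c != x i) && (c != y i)]).

Lemma cnP x y i : (cn x y i != x i) && (cn x y i != y i).
Proof.
rewrite /cn ffunE; case: pickP => // hn.
have [c hc] := pick3 (x i) (y i) (hm i).
by rewrite hn in hc.
Qed.

Lemma distE x y : dist e x y = if x == y then 0 else if e x y then 1 else 2.
Proof.
rewrite /dist.
case: eqP => [<-|hxy].
  have : 0 < #|T| by apply/card_gt0P; exists x.
  by case: #|T| => //= n _; rewrite walkb0 eqxx.
have [i hi] : exists i, x i != y i.
  case: (boolP [exists i, x i != y i]) => [/existsP //|/existsPn hall].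
  by exfalso; apply: hxy; apply/ffunP => i; apply/eqP; move: (hall i); rewrite negbK.
set z := cn x y.
have hz : uniq [:: x; y; z].
  rewrite /= !inE andbT negb_or; apply/andP; split; [apply/andP; split|].
  - by apply/eqP.
  - by apply/eqP => hxz; move: (cnP x y i); rewrite -/z -hxz eqxx.
  - by apply/eqP => hyz; move: (cnP x y i); rewrite -/z -hyz eqxx andbF.
have h3 : 3 <= #|T|.
  by move/card_uniqP: hz => /= <-; apply: max_card.
have -> : #|T| = (#|T| - 3).+3 by lia.
rewrite /= walkb0 walkb1.
move/eqP/negbTE: hxy => ->.
case: (e x y) => //.
have -> // : walkb e 2 x y.
apply/existsP; exists [tuple z; y]; rewrite /= eqxx !andbT.
apply/andP; split; apply/forallP => k; have /andP[h1 h2] := cnP x y k.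
  by rewrite eq_sym.
by [].
Qed.

Lemma setT_res : resolving e setT.
Proof.
apply/forallP=> x; apply/forallP=> y; apply/implyP => /forallP /(_ y).
rewrite in_setT /= !distE eqxx.
by case: (x =P y) => // _; case: (e x y).
Qed.
End Clique.

Section Proj.
Variables (t : nat) (m : 'I_t -> nat) (hm : forall i, 3 <= m i) (j : 'I_t).
Local Notation T := (clique_prod_vert m).
Local Notation e := (@clique_prod_adj _ m).
Local Notation T' := (clique_prod_vert (@omit_factor t m j)).
Local Notation e' := (@clique_prod_adj _ (@omit_factor t m j)).

Definition dflt (i : 'I_t) : 'I_(m i) := Ordinal (leq_trans (isT : 1 <= 3) (hm i)).

Definition proj (w : T) : T' := finfun (fun k => w (val k)).

Definition ext_fun (x' : T') (i : 'I_t) : 'I_(m i) :=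
  match i != j as b return (i != j) = b -> 'I_(m i) with
  | true => fun h => x' (exist _ i h)
  | false => fun _ => dflt i
  end (erefl _).

Lemma ext_fun_ne x' i (h : i != j) : ext_fun x' i = x' (exist _ i h).
Proof.
rewrite /ext_fun.
generalize (erefl (i != j)).
generalize (i != j) at 2 3; case=> E; first by rewrite (bool_irrelevance E h).
by exfalso; move: (h); rewrite E.
Qed.

Lemma ext_fun_j x' : ext_fun x' j = dflt j.
Proof.
rewrite /ext_fun; generalize (erefl (j != j)).
generalize (j != j) at 2 3; case=> E //.
by exfalso; move: E; rewrite eqxx.
Qed.

Definition ext (x' : T') : T := finfun (ext_fun x').

Lemma proj_ext x' : proj (ext x') = x'.
Proof.
apply/ffunP => -[i h]; rewrite !ffunE /=.
by rewrite ext_fun_ne.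
Qed.

Lemma eq_ext x' w : (ext x' == w) = (x' == proj w) && (dflt j == w j).
Proof.
apply/eqP/andP => [<-|[/eqP h1 /eqP h2]].
  by rewrite proj_ext ffunE ext_fun_j.
apply/ffunP => i; rewrite ffunE.
case: (eqVneq i j) => [->|hij]; first by rewrite ext_fun_j.
rewrite ext_fun_ne h1 ffunE //.
Qed.

Lemma adj_ext x' w : e (ext x') w = e' x' (proj w) && (dflt j != w j).
Proof.
apply/forallP/andP => [h|[/forallP h1 h2] i].
  split; last by have := h j; rewrite ffunE ext_fun_j.
  by apply/forallP => -[i hi]; have := h i; rewrite !ffunE ext_fun_ne.
rewrite ffunE; case: (eqVneq i j) => [->|hij]; first by rewrite ext_fun_j.
by rewrite ext_fun_ne; have := h1 (exist _ i hij); rewrite ffunE.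
Qed.

End Proj.

Theorem proposition2p4 (t : nat) (ht : 2 <= t) (m : 'I_t -> nat)
    (hm : forall i, 3 <= m i) :
  \max_(j < t) metric_dim (@clique_prod_adj _ (@omit_factor t m j))
    <= metric_dim (@clique_prod_adj _ m).
Proof.
have [W [hW hc]] := md_ex (setT_res hm).
rewrite -hc; apply/bigmax_leqP => j _.
have hm' : forall i, 3 <= @omit_factor t m j i by move=> i; apply: hm.
pose W' := [set proj j w | w in W].
apply: leq_trans (md_le (W := W') _) (leq_imset_card _ _).
apply/forallP => x'; apply/forallP => y'; apply/implyP => /forallP h.
have key : forall w, w \in W -> dist (@clique_prod_adj _ m) (ext hm x') w
                              = dist (@clique_prod_adj _ m) (ext hm y') w.
  move=> w hw; have := h (proj j w); rewrite imset_f //= => /eqP.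
  rewrite !(distE hm') !(distE hm) !eq_ext !adj_ext.
  case: (eqVneq x' (proj j w)) => [hx|hx]; case: (eqVneq y' (proj j w)) => [hy|hy] //=.
  - by rewrite hx hy.
  - by case: (clique_prod_adj _ _).
  - by case: (clique_prod_adj _ _).
  - by case: (clique_prod_adj x' _); case: (clique_prod_adj y' _).
have : ext hm x' = ext hm y'.
  move/forallP: hW => /(_ (ext hm x')) /forallP /(_ (ext hm y')) /implyP hi; apply/eqP; apply: hi.
  by apply/forallP => w; apply/implyP => hw; rewrite key.
by move/(congr1 (@proj t m j)); rewrite !proj_ext => ->.
Qed.
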